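(* Let $d\geq 3$, $k\geq 1$ and $2\leq l\leq d$. For every directed plateau polyhypercube $P$ of dimension $d$ and width $k$, the projection of $P$ onto the coordinate plane $(\vec{i_1},\vec{i_l})$ is a directed column-convex polyomino of width $k$.
   Context: Work in $\mathbb{Z}^d$ with orthonormal coordinate system $(0,\vec{i_1},\dots,\vec{i_d})$; a cell is a unit hypercube of the lattice. A polyhypercube of dimension $d$ is a finite union of cells, connected through their $(d-1)$-dimensional faces, defined up to translation. Its width is the number of distinct values of the $\vec{i_1}$-coordinate taken by its cells (so a polyhypercube of width one is called a stratum; the strata of a polyhypercube are its intersections with the layers of constant $\vec{i_1}$-coordinate). A plateau is a stratum that is a hyperrectangle (a box). An elementary step is a positive move of one unit along one axis $\vec{i_j}$, $1\leq j\leq d$. A polyhypercube is directed if there is a distinguished cell (the root) from which every cell can be reached by a path of cells of the polyhypercube using only elementary steps. A directed plateau polyhypercube is a directed polyhypercube all of whose strata are plateaus. The projection onto the plane $(\vec{i_1},\vec{i_l})$ is the set of unit squares $(x_1,x_l)$ such that some cell of the polyhypercube has these $\vec{i_1}$ and $\vec{i_l}$ coordinates; it is a polyomino whose columns correspond to the values of the $\vec{i_1}$-coordinate. A polyomino (finite edge-connected union of unit squares up to translation) is column-convex if its intersection with every column is connected, and directed if every cell can be reached from a root cell by a path of cells using only unit North or East steps; its width is its number of columns and its area its number of cells. *)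

(* Defs.v *)
From mathcomp Require Import all_boot all_order all_algebra.
Set Implicit Arguments. Unset Strict Implicit. Unset Printing Implicit Defensive.
Import Order.TTheory GRing.Theory Num.Theory.
Local Open Scope ring_scope.

(* A cell of Z^d is identified with its (lower) corner: a d-tuple of integers.
   Coordinates are 0-based: coordinate 0 is along i_1, coordinate l-1 along i_l. *)
Definition cell (d : nat) := (d.-tuple int)%type.

Definition coord {d} (x : cell d) (i : nat) : int := nth 0 (val x) i.

Definition step {d} (x y : cell d) (j : 'I_d) : bool :=
  (tnth y j == tnth x j + 1) &&
  [forall i : 'I_d, (i != j) ==> (tnth y i == tnth x i)].

Definition estep {d} (x y : cell d) : bool := [exists j : 'I_d, step x y j].

Definition adj {d} (x y : cell d) : bool := estep x y || estep y x.

(* A finite union of cells is represented by a finite sequence of cells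
   (read as a set via membership; defined up to translation is irrelevant
   since all notions below are translation invariant). *)
Definition face_connected {d} (S : seq (cell d)) : Prop :=
  forall x y, x \in S -> y \in S ->
    exists p : seq (cell d),
      [/\ path adj x p, last x p = y & all (fun z => z \in S) p].

Definition polyhypercube {d} (S : seq (cell d)) : Prop :=
  S != [::] /\ face_connected S.

Definition directed {d} (S : seq (cell d)) : Prop :=
  exists2 r, r \in S & forall x, x \in S ->
    exists p : seq (cell d),
      [/\ path estep r p, last r p = x & all (fun z => z \in S) p].

Definition width {d} (S : seq (cell d)) : nat :=
  size (undup [seq coord x 0 | x <- S]).

Definition stratum {d} (S : seq (cell d)) (a : int) : seq (cell d) :=
  [seq x <- S | coord x 0 == a].

Definition is_box {d} (T : seq (cell d)) : Prop :=
  exists lo hi : cell d, forall x : cell d,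
    (x \in T) = [forall i : 'I_d, (tnth lo i <= tnth x i <= tnth hi i)].

Definition plateau_strata {d} (S : seq (cell d)) : Prop :=
  forall a, a \in [seq coord x 0 | x <- S] -> is_box (stratum S a).

Definition directed_plateau_polyhypercube {d} (S : seq (cell d)) : Prop :=
  [/\ polyhypercube S, directed S & plateau_strata S].

(* projection onto the plane (i_1, i_l), with m = l - 1 the 0-based index *)
Definition proj {d} (S : seq (cell d)) (m : nat) : seq (cell 2) :=
  [seq [tuple coord x 0; coord x m] | x <- S].

(* Polyominoes: polyhypercubes of dimension 2 (columns = i_1 coordinate);
   directed in dimension 2 means reachable by East / North unit steps. *)
Definition polyomino (Q : seq (cell 2)) : Prop := polyhypercube Q.

Definition column_convex (Q : seq (cell 2)) : Prop :=
  forall x y z : cell 2, x \in Q -> y \in Q ->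
    coord x 0 = coord y 0 -> coord z 0 = coord x 0 ->
    coord x 1 <= coord z 1 <= coord y 1 -> z \in Q.

(* Main.v *)
Require Import Defs.
From mathcomp Require Import all_boot all_order all_algebra.
Import Order.TTheory GRing.Theory Num.Theory.

Definition pr {d} (m : nat) : cell d -> cell 2 := fun x => [tuple Defs.coord x 0; Defs.coord x m].

Lemma coordE d (x : cell d) (j : 'I_d) : Defs.coord x j = tnth x j.
Proof. by rewrite /Defs.coord (tnth_nth (0:int) (x : d.-tuple int)). Qed.

Lemma tnth_pr0 d m (x : cell d) : tnth (pr m x) ord0 = Defs.coord x 0.
Proof. by []. Qed.
Lemma tnth_pr1 d m (x : cell d) : tnth (pr m x) (@Ordinal 2 1 isT) = Defs.coord x m.
Proof. by []. Qed.

Lemma ord2P (P : 'I_2 -> Prop) : P ord0 -> P (@Ordinal 2 1 isT) -> forall i, P i.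
Proof. by move=> H0 H1 [[|[|n]] Hi] //; [rewrite (bool_irrelevance Hi (ltn0Sn 1))| rewrite (bool_irrelevance Hi isT)]. Qed.

Lemma coord_pr0 d m (x : cell d) : Defs.coord (pr m x) 0 = Defs.coord x 0.
Proof. by []. Qed.
Lemma coord_pr1 d m (x : cell d) : Defs.coord (pr m x) 1 = Defs.coord x m.
Proof. by []. Qed.

Lemma estep_pr d m (hm0 : (0 < m)%N) (hmd : (m < d)%N) (x y : cell d) :
  estep x y -> pr m x = pr m y \/ estep (pr m x) (pr m y).
Proof.
move/existsP=> [j /andP [/eqP hj /forallP hall]].
have Hne i : i != j -> Defs.coord y i = Defs.coord x i.
  by move=> hij; rewrite !coordE; apply/eqP; exact: (implyP (hall i)).
have Hj : Defs.coord y j = (Defs.coord x j + 1)%R by rewrite !coordE.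
have hd : (0 < d)%N by apply: leq_ltn_trans hmd.
pose o0 := Ordinal hd. pose om := Ordinal hmd.
have E0 : Defs.coord x 0 = Defs.coord x o0 by []. have E0' : Defs.coord y 0 = Defs.coord y o0 by [].
have Em : Defs.coord x m = Defs.coord x om by []. have Em' : Defs.coord y m = Defs.coord y om by [].
case: (eqVneq o0 j) => [hj0|hj0]; last case: (eqVneq om j) => [hjm|hjm].
- right; apply/existsP; exists ord0; apply/andP; split.
    by rewrite !tnth_pr0 E0 E0' hj0 Hj.
  apply/forallP; apply: ord2P => //=.
  rewrite !tnth_pr1 Em Em' Hne //; apply/eqP=> h; rewrite -h in hj0.
  by move/(congr1 val): hj0 => /= h0; rewrite -h0 in hm0.
- right; apply/existsP; exists (@Ordinal 2 1 isT); apply/andP; split.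
    by rewrite !tnth_pr1 Em Em' hjm Hj.
  apply/forallP; apply: ord2P => //=.
  by rewrite !tnth_pr0 E0 E0' Hne.
- left; apply: eq_from_tnth; apply: ord2P.
    by rewrite !tnth_pr0 E0 E0' Hne.
  by rewrite !tnth_pr1 Em Em' Hne.
Qed.

Lemma adj_pr d m (hm0 : (0 < m)%N) (hmd : (m < d)%N) (x y : cell d) :
  adj x y -> pr m x = pr m y \/ adj (pr m x) (pr m y).
Proof.
case/orP=> /(@estep_pr _ _ hm0 hmd) [->|h]; [by left| |by left| ].
  by right; rewrite /adj h.
by right; rewrite /adj h orbT.
Qed.

Lemma path_proj (T U : eqType) (f : T -> U) (e : rel T) (e' : rel U)
  (He : forall x y, e x y -> f x = f y \/ e' (f x) (f y)) r p :
  path e r p -> exists q, [/\ path e' (f r) q, last (f r) q = f (last r p)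
     & all (fun z => z \in map f p) q].
Proof.
elim: p r => [|y p IH] r /=; first by exists [::].
case/andP=> hry /IH [q [hq hl ha]].
have sub : all (fun z => z \in map f (y :: p)) q.
  by apply: sub_all ha => z /= hz; rewrite inE hz orbT.
case: (He _ _ hry) => [E|E].
  by exists q; rewrite E; split.
exists (f y :: q); split => //=; first by rewrite E.
by rewrite inE eqxx.
Qed.

Lemma all_map_sub d (f : cell d -> cell 2) (p P : seq (cell d)) q :
  all (fun z => z \in P) p -> all (fun z => z \in map f p) q ->
  all (fun z => z \in map f P) q.
Proof.
move=> /allP hp; apply: sub_all => z /mapP [w hw ->]; exact: map_f (hp _ hw).
Qed.

Theorem theorem1 (d k l : nat) (hd : 3 <= d) (hk : 1 <= k)
  (hl1 : 2 <= l) (hl2 : l <= d) (P : seq (cell d)) :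
  directed_plateau_polyhypercube P -> width P = k ->
  [/\ polyomino (proj P l.-1), directed (proj P l.-1),
      column_convex (proj P l.-1) & width (proj P l.-1) = k].
Proof.
move=> [[hne hconn] [r hr Hr] hpl] hw.
set m := l.-1.
have hm0 : (0 < m)%N by rewrite /m; clear m; case: l hl1 {hl2} => [|[|l]].
have hmd : (m < d)%N by rewrite /m; clear m hm0; case: l hl1 hl2 => [|l].
have -> : proj P m = map (pr m) P by [].
split.
- split; first by case: P hne {hconn Hr hpl hr hw}.
  move=> x y /mapP [x' hx' ->] /mapP [y' hy' ->].
  have [p [hp hl ha]] := hconn _ _ hx' hy'.
  have [q [hq hql hqa]] := @path_proj _ _ (pr m) adj adj (@adj_pr _ _ hm0 hmd) _ _ hp.
  exists q; split => //; first by rewrite hql hl.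
  exact: all_map_sub ha hqa.
- exists (pr m r); first exact: map_f.
  move=> x /mapP [x' hx' ->].
  have [p [hp hl ha]] := Hr _ hx'.
  have [q [hq hql hqa]] := @path_proj _ _ (pr m) estep estep (@estep_pr _ _ hm0 hmd) _ _ hp.
  exists q; split => //; first by rewrite hql hl.
  exact: all_map_sub ha hqa.
- move=> x y z /mapP [x' hx' ->] /mapP [y' hy' ->].
  rewrite !coord_pr0 coord_pr1 => h0 hz0 /andP [hxz hzy].
  set a := Defs.coord x' 0.
  have ha : a \in [seq Defs.coord x 0 | x <- P] := map_f _ hx'.
  have [lo [hi H]] := hpl a ha.
  have hxs : x' \in stratum P a by rewrite mem_filter eqxx hx'.
  have hys : y' \in stratum P a by rewrite mem_filter -h0 eqxx hy'.
  move: hxs hys; rewrite !H => /forallP hxb /forallP hyb.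
  pose om := Ordinal hmd.
  pose w : cell d := [tuple (if i == om then Defs.coord z 1 else tnth x' i) | i < d].
  have hwS : w \in stratum P a.
    rewrite H; apply/forallP => i; rewrite tnth_mktuple; case: eqP => [->|_]; last exact: hxb i.
    move: (hxb om) (hyb om) => /andP [h1 _] /andP [_ h2].
    rewrite -!coordE in h1 h2.
    rewrite -!coordE; by rewrite (le_trans h1 hxz) (le_trans hzy h2).
  move: hwS; rewrite mem_filter => /andP [/eqP hw0 hwP].
  have -> : z = pr m w.
    apply: eq_from_tnth; apply: ord2P.
      by rewrite tnth_pr0 hw0 -(@coordE 2 z ord0).
    rewrite tnth_pr1 -(@coordE 2 z (@Ordinal 2 1 isT)) (@coordE d w om) tnth_mktuple eqxx //.
  exact: map_f.
- by rewrite -hw /width -map_comp.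
Qed.
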